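(* A binary relation $\succsim$ on $l_\infty$ satisfies Weak order, Continuity, ICRP, Convexity, Monotone continuity, ISU, IOU, Strong monotonicity and IDIS if and only if there exists a unique $\delta\in(0,1)$ such that $$I(x)=(1-\delta)\sum_{t=0}^{\infty}\delta^t x_t$$ is a constant equivalent representing $\succsim$.
   Context: $l_\infty$: real bounded sequences $x=(x_0,x_1,\dots)$ with sup norm; $\theta\in\mathbb R$ also denotes a constant sequence; $x\ge y$ coordinatewise, $x>y$ means $x\ge y$ and $x\ne y$. A constant equivalent representing $\succsim$ is $I:l_\infty\to\mathbb R$ with $x\sim I(x)$ and $x\succsim y\iff I(x)\ge I(y)$. $xAy$ equals $x$ on $A$ and $y$ off $A$; $(E_n)\downarrow\emptyset$ means decreasing with empty intersection. Weak order: complete, transitive. Strong monotonicity: $x\ge y\Rightarrow x\succsim y$ and $x>y\Rightarrow x\succ y$. Continuity: for $x\succsim y\succsim z$ the sets $\{\alpha\in[0,1]:\alpha x+(1-\alpha)z\succsim y\}$, $\{\alpha\in[0,1]:y\succsim\alpha x+(1-\alpha)z\}$ are closed. ICRP: $x\succsim y\Rightarrow x+\theta\succsim y+\theta$. Convexity: $x\succsim\theta,y\succsim\theta\Rightarrow\lambda x+(1-\lambda)y\succsim\theta$ for $\lambda\in[0,1]$. Monotone continuity: if $x\succ\theta$ and $(E_n)\downarrow\emptyset$, then for every $k\in\mathbb R$ there is $n_0$ with $kE_{n_0}x\succ\theta$. ISU: $x\succsim y$, $\alpha\ge 0\Rightarrow\alpha x\succsim\alpha y$. IOU: $x\sim y\Rightarrow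 x+z\sim y+z$ for all $z\in l_\infty$. IDIS: $x+d\succsim x\Rightarrow x+(0,d)\succsim x$, where $(0,d)=(0,d_0,d_1,\dots)$. *)

(* Defs.v *)
From Stdlib Require Import Reals Rtopology.
From Coquelicot Require Import Coquelicot.
Open Scope R_scope.

Definition seqR := nat -> R.
Definition linf (x : seqR) : Prop := exists M, forall t, Rabs (x t) <= M.

Definition cst (th : R) : seqR := fun _ => th.
Definition sadd (x y : seqR) : seqR := fun t => x t + y t.
Definition sscal (a : R) (x : seqR) : seqR := fun t => a * x t.
Definition mix (a : R) (x z : seqR) : seqR := fun t => a * x t + (1 - a) * z t.
(* x A y : x on A, y off A (subsets of nat represented by boolean predicates) *)
Definition on_set (A : nat -> bool) (x y : seqR) : seqR :=
  fun t => if A t then x t else y t.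
Definition shift0 (d : seqR) : seqR :=
  fun t => match t with O => 0 | S t' => d t' end.

Definition sge (x y : seqR) : Prop := forall t, y t <= x t.
Definition sgt (x y : seqR) : Prop := sge x y /\ x <> y.

Definition sim (pref : seqR -> seqR -> Prop) (x y : seqR) := pref x y /\ pref y x.
Definition spref (pref : seqR -> seqR -> Prop) (x y : seqR) := pref x y /\ ~ pref y x.

Definition weak_order (pref : seqR -> seqR -> Prop) : Prop :=
  (forall x y, linf x -> linf y -> pref x y \/ pref y x) /\
  (forall x y z, linf x -> linf y -> linf z -> pref x y -> pref y z -> pref x z).

Definition strong_monotonicity (pref : seqR -> seqR -> Prop) : Prop :=
  forall x y, linf x -> linf y ->
    (sge x y -> pref x y) /\ (sgt x y -> spref pref x y).

Definition pref_continuity (pref : seqR -> seqR -> Prop) : Prop :=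
  forall x y z, linf x -> linf y -> linf z -> pref x y -> pref y z ->
    closed_set (fun a => 0 <= a <= 1 /\ pref (mix a x z) y) /\
    closed_set (fun a => 0 <= a <= 1 /\ pref y (mix a x z)).

Definition ICRP (pref : seqR -> seqR -> Prop) : Prop :=
  forall x y (th : R), linf x -> linf y ->
    pref x y -> pref (sadd x (cst th)) (sadd y (cst th)).

Definition convexity (pref : seqR -> seqR -> Prop) : Prop :=
  forall x y (th : R) (l : R), linf x -> linf y ->
    pref x (cst th) -> pref y (cst th) -> 0 <= l <= 1 ->
    pref (mix l x y) (cst th).

Definition decr_to_empty (E : nat -> nat -> bool) : Prop :=
  (forall n t, E (S n) t = true -> E n t = true) /\
  (forall t, exists n, E n t = false).

Definition monotone_continuity (pref : seqR -> seqR -> Prop) : Prop :=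
  forall x (th : R) (E : nat -> nat -> bool), linf x ->
    spref pref x (cst th) -> decr_to_empty E ->
    forall k : R, exists n0, spref pref (on_set (E n0) (cst k) x) (cst th).

Definition ISU (pref : seqR -> seqR -> Prop) : Prop :=
  forall x y (a : R), linf x -> linf y -> pref x y -> 0 <= a ->
    pref (sscal a x) (sscal a y).

Definition IOU (pref : seqR -> seqR -> Prop) : Prop :=
  forall x y z, linf x -> linf y -> linf z -> sim pref x y ->
    sim pref (sadd x z) (sadd y z).

Definition IDIS (pref : seqR -> seqR -> Prop) : Prop :=
  forall x d, linf x -> linf d -> pref (sadd x d) x ->
    pref (sadd x (shift0 d)) x.

Definition const_equiv_rep (pref : seqR -> seqR -> Prop) (I : seqR -> R) : Prop :=
  (forall x, linf x -> sim pref x (cst (I x))) /\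
  (forall x y, linf x -> linf y -> (pref x y <-> I x >= I y)).

Definition disc_util (delta : R) (x : seqR) : R :=
  (1 - delta) * Series (fun t => delta ^ t * x t).

(* Main.v *)
Require Import Defs.
From Stdlib Require Import Reals Rtopology Lra Lia ClassicalEpsilon FunctionalExtensionality Classical.
From Coquelicot Require Import Coquelicot.
Open Scope R_scope.

Lemma linf_cst c : linf (cst c).
Proof. exists (Rabs c). intros; unfold cst; lra. Qed.
Lemma linf_sadd x y : linf x -> linf y -> linf (sadd x y).
Proof. intros [M HM] [N HN]; exists (M+N); intro t; unfold sadd;
  eapply Rle_trans; [apply Rabs_triang|]; specialize (HM t); specialize (HN t); lra. Qed.
Lemma linf_sscal a x : linf x -> linf (sscal a x).
Proof. intros [M HM]; exists (Rabs a * M); intro t; unfold sscal; rewrite Rabs_mult;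
  apply Rmult_le_compat_l; [apply Rabs_pos|apply HM]. Qed.
Lemma linf_mix a x z : linf x -> linf z -> linf (mix a x z).
Proof. intros. change (linf (sadd (sscal a x) (sscal (1-a) z))).
  apply linf_sadd; apply linf_sscal; auto. Qed.
Lemma linf_bound x : linf x -> exists M, 0 <= M /\ forall t, Rabs (x t) <= M.
Proof. intros [M HM]. exists M; split; auto. apply Rle_trans with (Rabs (x 0%nat)); auto; apply Rabs_pos. Qed.
Lemma linf_on_set A x y : linf x -> linf y -> linf (on_set A x y).
Proof. intros [M HM] [N HN]. exists (Rmax M N). intro t; unfold on_set; destruct (A t).
  - eapply Rle_trans; [apply HM|apply Rmax_l].
  - eapply Rle_trans; [apply HN|apply Rmax_r]. Qed.
Lemma linf_shift0 d : linf d -> linf (shift0 d).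
Proof. intros H; destruct (linf_bound d H) as [M [HM0 HM]]. exists M. intro t; destruct t; simpl.
  - rewrite Rabs_R0; auto. - apply HM. Qed.
Lemma linf_le x M : (forall t, Rabs (x t) <= M) -> linf x.
Proof. intros; exists M; auto. Qed.

Lemma sum_single f n : (forall t, (t < n)%nat -> f t = 0) -> sum_f_R0 f n = f n.
Proof. induction n; intros H; simpl; auto.
  assert (sum_f_R0 f n = 0). { rewrite IHn. apply H; lia. intros; apply H; lia. }
  lra. Qed.
Lemma sum_stable f N n : (forall t, (N < t)%nat -> f t = 0) -> (N <= n)%nat ->
  sum_f_R0 f n = sum_f_R0 f N.
Proof. intros H Hn; induction Hn; auto. simpl. rewrite IHHn, H; [ring|lia]. Qed.

Lemma series_of_sum a l : infinite_sum a l -> Series a = l.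
Proof. intros; apply is_series_unique; apply is_series_Reals; auto. Qed.

Lemma series_fin a N : (forall t, (N < t)%nat -> a t = 0) -> Series a = sum_f_R0 a N.
Proof. intros H; apply series_of_sum. intros eps He; exists N; intros n Hn.
  rewrite (sum_stable a N n H Hn). unfold Rdist. rewrite Rminus_diag, Rabs_R0; lra. Qed.

Lemma closed_affine (P : R -> Prop) p q :
  (forall a, P a <-> 0 <= a <= 1 /\ p * a + q >= 0) -> closed_set P.
Proof.
  intros HP. unfold closed_set, open_set, complementary, neighbourhood, included, disc.
  intros a Ha. rewrite HP in Ha.
  destruct (Rlt_or_le a 0) as [H0|H0].
  { assert (Hd: 0 < -a) by lra. exists (mkposreal _ Hd). simpl. intros y Hy Py.
    rewrite HP in Py. apply Rabs_def2 in Hy. lra. }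
  destruct (Rlt_or_le 1 a) as [H1|H1].
  { assert (Hd: 0 < a - 1) by lra. exists (mkposreal _ Hd). simpl. intros y Hy Py.
    rewrite HP in Py. apply Rabs_def2 in Hy. lra. }
  assert (Hq : p * a + q < 0) by (apply Rnot_ge_lt; intro; apply Ha; auto).
  assert (Hp: 0 < Rabs p + 1) by (pose proof (Rabs_pos p); lra).
  assert (Hd: 0 < -(p*a+q) / (Rabs p + 1)) by (apply Rdiv_lt_0_compat; lra).
  exists (mkposreal _ Hd). simpl. intros y Hy Py. rewrite HP in Py. destruct Py as [_ Py].
  assert (E1: p * (y - a) <= Rabs p * Rabs (y - a)) by (rewrite <- Rabs_mult; apply Rle_abs).
  assert (E2: Rabs p * Rabs (y - a) <= Rabs p * (-(p*a+q) / (Rabs p + 1)))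
    by (apply Rmult_le_compat_l; [apply Rabs_pos|lra]).
  assert (E3: Rabs p * (-(p*a+q) / (Rabs p + 1)) < -(p*a+q)).
  { apply Rmult_lt_reg_r with (Rabs p + 1); auto.
    replace (Rabs p * (- (p * a + q) / (Rabs p + 1)) * (Rabs p + 1)) with (Rabs p * (-(p*a+q))) by (field; lra).
    pose proof (Rabs_pos p). nra. }
  nra.
Qed.

Lemma ex_lin d x : 0 < d < 1 -> linf x -> ex_series (fun t => d ^ t * x t).
Proof.
  intros Hd Hx. destruct (linf_bound x Hx) as [M [HM0 HM]].
  apply ex_series_Rabs. apply (@ex_series_le R_AbsRing R_CompleteNormedModule _ (fun t => M * d ^ t)).
  - intro n. change (Rabs (Rabs (d ^ n * x n)) <= M * d ^ n).
    rewrite Rabs_Rabsolu, Rabs_mult, <- RPow_abs, (Rabs_right d) by lra.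
    rewrite Rmult_comm. apply Rmult_le_compat_r; [apply pow_le; lra| apply HM].
  - apply (ex_series_scal_l M (fun t => d ^ t)). apply ex_series_geom. rewrite Rabs_right; lra.
Qed.

Lemma D_ext d x y : (forall t, x t = y t) -> disc_util d x = disc_util d y.
Proof. intros H; unfold disc_util; f_equal; apply Series_ext; intro; rewrite H; auto. Qed.

Lemma D_add d x y : 0 < d < 1 -> linf x -> linf y ->
  disc_util d (sadd x y) = disc_util d x + disc_util d y.
Proof. intros Hd Hx Hy; unfold disc_util, sadd.
  rewrite (Series_ext _ (fun t => d ^ t * x t + d ^ t * y t)) by (intro; ring).
  rewrite Series_plus by (apply ex_lin; auto). ring. Qed.

Lemma D_scal d a x : disc_util d (sscal a x) = a * disc_util d x.
Proof. unfold disc_util, sscal.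
  rewrite (Series_ext _ (fun t => a * (d ^ t * x t))) by (intro; ring).
  rewrite Series_scal_l. ring. Qed.

Lemma D_cst d c : 0 < d < 1 -> disc_util d (cst c) = c.
Proof. intros Hd. unfold disc_util, cst.
  rewrite (Series_ext _ (fun t => c * (d ^ t))) by (intro; ring).
  rewrite Series_scal_l. rewrite (is_series_unique (pow d) _ (is_series_geom d ltac:(rewrite Rabs_right; lra))).
  field. lra. Qed.

Lemma D_mix d a x z : 0 < d < 1 -> linf x -> linf z ->
  disc_util d (mix a x z) = a * disc_util d x + (1 - a) * disc_util d z.
Proof. intros Hd Hx Hz. change (mix a x z) with (sadd (sscal a x) (sscal (1-a) z)).
  rewrite D_add by (auto; apply linf_sscal; auto). rewrite !D_scal. auto. Qed.

Lemma D_nonneg d w : 0 < d < 1 -> linf w -> (forall t, 0 <= w t) -> 0 <= disc_util d w.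
Proof. intros Hd Hw Hp. unfold disc_util. apply Rmult_le_pos; [lra|].
  assert (H0 : Series (fun _ => 0) = 0).
  { rewrite (Series_ext _ (fun n => 0 * (fun _ => 0) n)) by (intro; ring).
    rewrite Series_scal_l; ring. }
  rewrite <- H0. apply Series_le; [|apply ex_lin; auto].
  intro n; split; [lra|]. apply Rmult_le_pos; [apply pow_le; lra|auto]. Qed.

Lemma D_mono d x y : 0 < d < 1 -> linf x -> linf y -> sge x y -> disc_util d y <= disc_util d x.
Proof. intros Hd Hx Hy H.
  assert (0 <= disc_util d (sadd x (sscal (-1) y))).
  { apply D_nonneg; auto. apply linf_sadd; auto; apply linf_sscal; auto.
    intro t; unfold sadd, sscal; specialize (H t); lra. }
  rewrite D_add, D_scal in H0 by (auto; apply linf_sscal; auto). lra. Qed.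

Lemma D_fin d x N : (forall t, (N < t)%nat -> x t = 0) ->
  disc_util d x = (1 - d) * sum_f_R0 (fun t => d ^ t * x t) N.
Proof. intros H; unfold disc_util. rewrite (series_fin _ N); auto.
  intros t Ht; rewrite H; auto; ring. Qed.

Lemma D_pos d w t0 : 0 < d < 1 -> linf w -> (forall t, 0 <= w t) -> 0 < w t0 -> 0 < disc_util d w.
Proof. intros Hd Hw Hp Ht.
  set (w' := fun t => if Nat.eqb t t0 then w t0 else 0).
  assert (Lw' : linf w'). { exists (Rabs (w t0)); intro t; unfold w'; destruct (Nat.eqb t t0);
    [lra| rewrite Rabs_R0; apply Rabs_pos]. }
  assert (Hm : disc_util d w' <= disc_util d w).
  { apply D_mono; auto. intro t; unfold w'. destruct (Nat.eqb_spec t t0); [subst; lra|auto]. }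
  rewrite (D_fin d w' t0) in Hm.
  2:{ intros t Ht'; unfold w'; destruct (Nat.eqb_spec t t0); [lia|auto]. }
  rewrite sum_single in Hm.
  2:{ intros t Ht'; unfold w'; destruct (Nat.eqb_spec t t0); [lia|ring]. }
  unfold w' in Hm; rewrite Nat.eqb_refl in Hm.
  assert (0 < d ^ t0) by (apply pow_lt; lra).
  assert (0 < (1 - d) * (d ^ t0 * w t0)) by (apply Rmult_lt_0_compat; [lra|apply Rmult_lt_0_compat; auto]).
  lra. Qed.

Lemma D_shift0 d x : 0 < d < 1 -> linf x -> disc_util d (shift0 x) = d * disc_util d x.
Proof. intros Hd Hx. unfold disc_util.
  rewrite Series_incr_1 by (apply ex_lin; auto; apply linf_shift0; auto).
  simpl. rewrite (Series_ext _ (fun k => d * (d ^ k * x k))) by (intro; simpl; ring).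
  rewrite Series_scal_l. ring. Qed.

Definition Qs (N : nat) : seqR := fun t => if Nat.leb t N then 0 else 1.
Definition Ps (N : nat) : seqR := fun t => if Nat.leb t N then 1 else 0.
Lemma linf_Qs N : linf (Qs N).
Proof. exists 1; intro t; unfold Qs; destruct (Nat.leb t N); rewrite ?Rabs_R0, ?Rabs_R1; lra. Qed.
Lemma linf_Ps N : linf (Ps N).
Proof. exists 1; intro t; unfold Ps; destruct (Nat.leb t N); rewrite ?Rabs_R0, ?Rabs_R1; lra. Qed.

Lemma geom_sum d N : d <> 1 -> sum_f_R0 (fun t => d ^ t) N = (1 - d ^ (S N)) / (1 - d).
Proof. intros H. pose proof (GP_finite d N). rewrite Nat.add_1_r in H0.
  apply Rmult_eq_reg_r with (d - 1); [|lra]. rewrite H0. field. lra. Qed.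

Lemma D_Qs d N : 0 < d < 1 -> disc_util d (Qs N) = d ^ (S N).
Proof. intros Hd.
  assert (H1: disc_util d (cst 1) = disc_util d (Qs N) + disc_util d (Ps N)).
  { rewrite <- D_add by first [exact Hd | apply linf_Qs | apply linf_Ps]. apply D_ext.
    intro t; unfold cst, sadd, Qs, Ps; destruct (Nat.leb t N); ring. }
  rewrite D_cst in H1 by auto.
  rewrite (D_fin d (Ps N) N) in H1.
  2:{ intros t Ht; unfold Ps; destruct (Nat.leb_spec t N); [lia|auto]. }
  rewrite (sum_eq _ (fun t => d ^ t)) in H1.
  2:{ intros i Hi; unfold Ps; destruct (Nat.leb_spec i N); [ring|lia]. }
  rewrite geom_sum in H1 by lra.
  replace ((1 - d) * ((1 - d ^ S N) / (1 - d))) with (1 - d ^ S N) in H1 by (field; lra).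
  lra. Qed.

Lemma E_stays E : decr_to_empty E -> forall n m t, (n <= m)%nat -> E n t = false -> E m t = false.
Proof. intros [H1 H2] n m t Hle Hn. induction Hle; auto.
  destruct (E (S m) t) eqn:Q; auto. apply H1 in Q. congruence. Qed.

Lemma E_init E : decr_to_empty E -> forall N, exists n, forall t, (t <= N)%nat -> E n t = false.
Proof. intros HE. pose proof HE as [H1 H2]. induction N.
  - destruct (H2 0%nat) as [n Hn]. exists n. intros t Ht. replace t with 0%nat by lia. auto.
  - destruct IHN as [n1 Hn1]. destruct (H2 (S N)) as [n2 Hn2]. exists (Nat.max n1 n2).
    intros t Ht. destruct (Nat.eq_dec t (S N)).
    + subst. apply (E_stays E HE n2); auto; lia.
    + apply (E_stays E HE n1); [lia|]. apply Hn1; lia. Qed.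

Lemma rep_to_axioms d pref : 0 < d < 1 -> const_equiv_rep pref (disc_util d) ->
  (weak_order pref /\ pref_continuity pref /\ ICRP pref /\ convexity pref /\
   monotone_continuity pref /\ ISU pref /\ IOU pref /\
   strong_monotonicity pref /\ IDIS pref).
Proof.
  intros Hd [Hsim Hc].
  assert (Hs : forall x y, linf x -> linf y -> spref pref x y <-> disc_util d x > disc_util d y).
  { intros x y Hx Hy; unfold spref; rewrite (Hc x y Hx Hy), (Hc y x Hy Hx); split.
    - intros [_ H]; lra. - intros H; split; lra. }
  assert (Hsm : forall x y, linf x -> linf y -> sim pref x y <-> disc_util d x = disc_util d y).
  { intros x y Hx Hy; unfold sim; rewrite (Hc x y Hx Hy), (Hc y x Hy Hx); split.
    - intros [H1 H2]; lra. - intros H; split; lra. }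
  pose proof linf_cst as Lc.
  split; [|split; [|split; [|split; [|split; [|split; [|split; [|split]]]]]]].
  - split.
    + intros x y Hx Hy. destruct (Rle_or_lt (disc_util d y) (disc_util d x)).
      * left; apply Hc; auto; lra. * right; apply Hc; auto; lra.
    + intros x y z Hx Hy Hz H1 H2. apply Hc in H1; auto. apply Hc in H2; auto. apply Hc; auto; lra.
  - intros x y z Hx Hy Hz _ _. split.
    + apply (closed_affine _ (disc_util d x - disc_util d z) (disc_util d z - disc_util d y)).
      intro a. rewrite Hc by (auto; apply linf_mix; auto). rewrite D_mix by auto.
      split; intros [H1 H2]; split; auto; lra.
    + apply (closed_affine _ (disc_util d z - disc_util d x) (disc_util d y - disc_util d z)).
      intro a. rewrite Hc by (auto; apply linf_mix; auto). rewrite D_mix by auto.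
      split; intros [H1 H2]; split; auto; lra.
  - intros x y th Hx Hy H. apply Hc in H; auto.
    apply Hc; try (apply linf_sadd; auto). rewrite !D_add, D_cst by auto. lra.
  - intros x y th l Hx Hy H1 H2 Hl. apply Hc in H1; auto. apply Hc in H2; auto.
    apply Hc; auto. apply linf_mix; auto. rewrite D_mix, D_cst in * by auto. nra.
  - intros x th E Hx Hxs HE k.
    apply Hs in Hxs; auto. rewrite D_cst in Hxs by auto.
    destruct (linf_bound x Hx) as [M [HM0 HM]].
    set (K := Rabs k + M).
    assert (HK : 0 <= K) by (unfold K; pose proof (Rabs_pos k); lra).
    destruct (pow_lt_1_zero d ltac:(rewrite Rabs_right; lra) ((disc_util d x - th) / (K + 1)))
      as [N HN]. { apply Rdiv_lt_0_compat; lra. }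
    specialize (HN (S N) ltac:(lia)). rewrite Rabs_right in HN by (apply Rle_ge, pow_le; lra).
    destruct (E_init E HE N) as [n Hn]. exists n.
    assert (Lw : linf (on_set (E n) (cst k) x)) by (apply linf_on_set; auto).
    apply Hs; auto. rewrite D_cst by auto.
    assert (Hm : disc_util d (sadd x (sscal (-K) (Qs N))) <= disc_util d (on_set (E n) (cst k) x)).
    { apply D_mono; auto. apply linf_sadd; auto; apply linf_sscal, linf_Qs.
      intro t. unfold on_set, sadd, sscal, Qs, cst.
      destruct (Nat.leb_spec t N).
      - rewrite Hn by lia. lra.
      - destruct (E n t).
        + specialize (HM t). pose proof (Rle_abs (x t)). pose proof (Rabs_pos k).
          pose proof (Rle_abs (-k)) as Hk. rewrite Rabs_Ropp in Hk. unfold K. lra.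
        + lra. }
    rewrite D_add, D_scal, D_Qs in Hm by (auto; apply linf_sscal, linf_Qs).
    assert (K * d ^ S N <= (K + 1) * d ^ S N) by (pose proof (pow_le d (S N)); nra).
    assert ((K + 1) * d ^ S N < disc_util d x - th).
    { apply Rmult_lt_reg_r with (/ (K+1)). apply Rinv_0_lt_compat; lra.
      replace ((K + 1) * d ^ S N * / (K + 1)) with (d ^ S N) by (field; lra). exact HN. }
    lra.
  - intros x y a Hx Hy H Ha. apply Hc in H; auto.
    apply Hc; try (apply linf_sscal; auto). rewrite !D_scal. nra.
  - intros x y z Hx Hy Hz H. apply Hsm in H; auto.
    apply Hsm; try (apply linf_sadd; auto). rewrite !D_add by auto. lra.
  - intros x y Hx Hy. split.
    + intros H. apply Hc; auto. apply Rle_ge, D_mono; auto.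
    + intros [H Hne]. apply Hs; auto.
      assert (exists t, x t <> y t).
      { apply NNPP; intro Hn. apply Hne. apply functional_extensionality. intro t.
        apply NNPP; intro; apply Hn; exists t; auto. }
      destruct H0 as [t0 Ht0].
      assert (0 < disc_util d (sadd x (sscal (-1) y))).
      { apply (D_pos d _ t0); auto. apply linf_sadd; auto; apply linf_sscal; auto.
        intro t; unfold sadd, sscal; specialize (H t); lra.
        unfold sadd, sscal. specialize (H t0). lra. }
      rewrite D_add, D_scal in H0 by (auto; apply linf_sscal; auto). lra.
  - intros x dd Hx Hdd H. apply Hc in H; auto. 2: apply linf_sadd; auto.
    apply Hc; auto. apply linf_sadd; auto; apply linf_shift0; auto.
    rewrite D_add in * by (auto; apply linf_shift0; auto). rewrite D_shift0 by auto. nra.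
Qed.

Lemma cst_ge pref : strong_monotonicity pref -> forall c c', c' <= c -> pref (cst c) (cst c').
Proof. intros SM c c' H. apply (proj1 (SM _ _ (linf_cst c) (linf_cst c'))). intro; unfold cst; lra. Qed.

Lemma cst_gt pref : strong_monotonicity pref -> forall c c', c' < c -> spref pref (cst c) (cst c').
Proof. intros SM c c' H. apply (proj2 (SM _ _ (linf_cst c) (linf_cst c'))). split.
  - intro; unfold cst; lra.
  - intro E. apply (f_equal (fun f => f 0%nat)) in E. unfold cst in E. lra. Qed.

Lemma ce_exists pref : weak_order pref -> strong_monotonicity pref -> pref_continuity pref ->
  forall x, linf x -> exists c, sim pref x (cst c).
Proof.
  intros [WC WT] SM PC x Hx. destruct (linf_bound x Hx) as [M0 [HM0 HM]].
  set (M := M0 + 1).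
  set (y := cst M). set (z := cst (-M)).
  assert (Hmix : forall a, mix a y z = cst (a * M + (1 - a) * (-M))).
  { intro a; apply functional_extensionality; intro; reflexivity. }
  assert (Hyx : pref y x). { apply (proj1 (SM _ _ (linf_cst _) Hx)). intro t; unfold y, cst.
     specialize (HM t). pose proof (Rle_abs (x t)). unfold M; lra. }
  assert (Hxz : pref x z). { apply (proj1 (SM _ _ Hx (linf_cst _))). intro t; unfold z, cst.
     specialize (HM t). pose proof (Rle_abs (- x t)). rewrite Rabs_Ropp in H. unfold M; lra. }
  destruct (PC y x z (linf_cst _) Hx (linf_cst _) Hyx Hxz) as [CA CB].
  set (B := fun a => 0 <= a <= 1 /\ pref x (mix a y z)) in CB.
  set (A := fun a => 0 <= a <= 1 /\ pref (mix a y z) x) in CA.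
  assert (B0 : B 0). { split; [lra|]. rewrite Hmix. replace (0 * M + (1 - 0) * - M) with (-M) by ring. exact Hxz. }
  destruct (completeness B) as [m [Hub Hlub]].
  { exists 1. intros a [Ha _]; lra. } { exists 0; auto. }
  assert (Hm0 : 0 <= m) by (apply Hub; auto).
  assert (Hm1 : m <= 1) by (apply Hlub; intros a [Ha _]; lra).
  assert (Bm : B m).
  { apply NNPP; intro nB. destruct (CB m nB) as [del Hdel].
    assert (~ is_upper_bound B (m - del / 2)).
    { intro H. apply Hlub in H. destruct del; simpl in *; lra. }
    apply not_all_ex_not in H. destruct H as [b Hb].
    apply imply_to_and in Hb. destruct Hb as [Bb Hb].
    assert (b <= m) by (apply Hub; auto).
    apply (Hdel b); auto. unfold disc. destruct del as [dl Hdl]; simpl in *.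
    rewrite Rabs_left1; lra. }
  assert (Am : A m).
  { apply NNPP; intro nA. destruct (Req_dec m 1) as [E1|E1].
    - apply nA. split; [lra|]. rewrite Hmix, E1. replace (1 * M + (1 - 1) * - M) with M by ring. exact Hyx.
    - destruct (CA m nA) as [del Hdel].
      set (a := Rmin (m + del / 2) 1).
      assert (Ha1 : m < a). { unfold a. destruct del; simpl. apply Rmin_glb_lt; lra. }
      assert (Ha2 : a <= 1) by apply Rmin_r.
      assert (Ha3 : a <= m + del / 2) by apply Rmin_l.
      assert (nAa : ~ A a). { apply Hdel. unfold disc. rewrite Rabs_right by lra. destruct del; simpl in *; lra. }
      destruct (WC (mix a y z) x) as [H|H]; auto.
      + rewrite Hmix; apply linf_cst.
      + apply nAa; split; auto; lra.
      + assert (B a) by (split; auto; lra). apply Hub in H0. lra. }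
  exists (m * M + (1 - m) * (- M)). rewrite <- Hmix. split; [apply Bm|apply Am].
Qed.

Definition AX pref := (weak_order pref /\ pref_continuity pref /\ ICRP pref /\ convexity pref /\
   monotone_continuity pref /\ ISU pref /\ IOU pref /\
   strong_monotonicity pref /\ IDIS pref).

Ltac dax H := destruct H as (WO & PC & IC & CV & MC & IS & IO & SM & ID).

Definition Ice pref x := epsilon (inhabits 0) (fun c => sim pref x (cst c)).

Lemma I_spec pref x : AX pref -> linf x -> sim pref x (cst (Ice pref x)).
Proof. intros H Hx. dax H. unfold Ice. apply epsilon_spec. apply ce_exists; auto. Qed.

Lemma I_unique pref x c : AX pref -> linf x -> sim pref x (cst c) -> Ice pref x = c.
Proof. intros H Hx Hs. pose proof (I_spec pref x H Hx) as [S1 S2]. destruct Hs as [T1 T2].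
  dax H. destruct WO as [WC WT].
  destruct (Rtotal_order (Ice pref x) c) as [L|[E|L]]; auto.
  - destruct (cst_gt pref SM _ _ L) as [_ N]. exfalso; apply N. eapply WT; eauto; apply linf_cst.
  - destruct (cst_gt pref SM _ _ L) as [_ N]. exfalso; apply N. eapply WT; eauto; apply linf_cst.
Qed.

Lemma I_rep pref x y : AX pref -> linf x -> linf y -> (pref x y <-> Ice pref x >= Ice pref y).
Proof. intros H Hx Hy. pose proof (I_spec pref x H Hx) as [S1 S2].
  pose proof (I_spec pref y H Hy) as [T1 T2].
  dax H. destruct WO as [WC WT]. pose proof (linf_cst (Ice pref x)). pose proof (linf_cst (Ice pref y)).
  split.
  - intro Hp. apply Rnot_lt_ge; intro L. destruct (cst_gt pref SM _ _ L) as [_ N]. apply N.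
    apply WT with x; auto. apply WT with y; auto.
  - intro L. apply WT with (cst (Ice pref x)); auto. apply WT with (cst (Ice pref y)); auto.
    apply cst_ge; auto; lra.
Qed.

Lemma I_cst pref c : AX pref -> Ice pref (cst c) = c.
Proof. intros H. apply I_unique; auto. apply linf_cst. dax H. split; apply cst_ge; auto; lra. Qed.

Lemma I_ext pref x y : (forall t, x t = y t) -> Ice pref x = Ice pref y.
Proof. intros E. f_equal. apply functional_extensionality; auto. Qed.

Lemma I_mono pref x y : AX pref -> linf x -> linf y -> sge x y -> Ice pref y <= Ice pref x.
Proof. intros H Hx Hy S. apply Rge_le. apply I_rep; auto. dax H. apply (proj1 (SM x y Hx Hy)); auto. Qed.

Lemma I_sim pref x y : AX pref -> linf x -> linf y -> sim pref x y -> Ice pref x = Ice pref y.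
Proof. intros H Hx Hy [S1 S2]. apply I_rep in S1; auto. apply I_rep in S2; auto. lra. Qed.

Lemma I_add_cst pref x th : AX pref -> linf x -> Ice pref (sadd x (cst th)) = Ice pref x + th.
Proof. intros H Hx. apply I_unique; auto. apply linf_sadd; auto; apply linf_cst.
  pose proof (I_spec pref x H Hx) as [S1 S2]. dax H.
  split; [apply (IC x (cst (Ice pref x)) th) | apply (IC (cst (Ice pref x)) x th)]; auto; apply linf_cst.
Qed.

Lemma I_add pref x z : AX pref -> linf x -> linf z -> Ice pref (sadd x z) = Ice pref x + Ice pref z.
Proof. intros H Hx Hz.
  assert (S : sim pref (sadd x z) (sadd (cst (Ice pref x)) z)).
  { pose proof (I_spec pref x H Hx). pose proof H as H'. dax H'. apply IO; auto. apply linf_cst. }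
  rewrite (I_sim pref (sadd x z) (sadd (cst (Ice pref x)) z) H);
   [| apply linf_sadd; auto | apply linf_sadd; auto; apply linf_cst | exact S].
  rewrite (I_ext pref _ (sadd z (cst (Ice pref x)))) by (intro; unfold sadd; ring).
  rewrite I_add_cst; auto. ring. Qed.

Lemma I_scal_pos pref a x : AX pref -> linf x -> 0 <= a -> Ice pref (sscal a x) = a * Ice pref x.
Proof. intros H Hx Ha. apply I_unique; auto. apply linf_sscal; auto.
  pose proof (I_spec pref x H Hx) as [S1 S2]. dax H.
  split; [apply (IS x (cst (Ice pref x)) a) | apply (IS (cst (Ice pref x)) x a)]; auto; apply linf_cst.
Qed.

Lemma I_scal pref a x : AX pref -> linf x -> Ice pref (sscal a x) = a * Ice pref x.
Proof. intros H Hx. destruct (Rle_or_lt 0 a). apply I_scal_pos; auto.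
  assert (E : Ice pref (sadd (sscal a x) (sscal (-a) x)) = 0).
  { rewrite (I_ext pref _ (cst 0)) by (intro; unfold sadd, sscal, cst; ring). apply I_cst; auto. }
  rewrite I_add, (I_scal_pos pref (-a)) in E by (auto; try apply linf_sscal; auto; lra). lra. Qed.

Definition ev (t : nat) : seqR := fun s => if Nat.eqb s t then 1 else 0.
Lemma linf_ev t : linf (ev t).
Proof. exists 1; intro s; unfold ev; destruct (Nat.eqb s t); rewrite ?Rabs_R0, ?Rabs_R1; lra. Qed.

Definition mu pref t := Ice pref (ev t).

Lemma mu_pos pref t : AX pref -> 0 < mu pref t.
Proof. intros H. unfold mu. pose proof H as H'. dax H'.
  destruct (proj2 (SM (ev t) (cst 0) (linf_ev t) (linf_cst 0))) as [_ N].
  - split. intro s; unfold ev, cst; destruct (Nat.eqb s t); lra.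
    intro E. apply (f_equal (fun f => f t)) in E. unfold ev, cst in E. rewrite Nat.eqb_refl in E. lra.
  - apply Rnot_le_lt. intro L. apply N. apply I_rep; auto. apply linf_cst. apply linf_ev.
    rewrite I_cst; auto. lra. Qed.

Lemma idis_step pref t s : AX pref ->
  s * (mu pref t * mu pref 1 - mu pref 0 * mu pref (S t)) >= 0.
Proof. intros H. pose proof H as H'. dax H'.
  set (d := sadd (sscal (s * mu pref t) (ev 0)) (sscal (-(s * mu pref 0)) (ev t))).
  assert (Ld : linf d) by (apply linf_sadd; apply linf_sscal; apply linf_ev).
  assert (Id : Ice pref d = 0).
  { unfold d. rewrite I_add, !I_scal by (auto; try apply linf_sscal; apply linf_ev). unfold mu. ring. }
  assert (P1 : pref (sadd (cst 0) d) (cst 0)).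
  { apply I_rep; auto. apply linf_sadd; auto; apply linf_cst. apply linf_cst.
    rewrite I_add, I_cst, Id by (auto; apply linf_cst). lra. }
  apply ID in P1; auto; [|apply linf_cst].
  apply I_rep in P1; auto; [|apply linf_sadd; [apply linf_cst|apply linf_shift0; auto] | apply linf_cst].
  rewrite I_add, !I_cst in P1 by (auto; try apply linf_cst; apply linf_shift0; auto).
  rewrite (I_ext pref _ (sadd (sscal (s * mu pref t) (ev 1)) (sscal (-(s * mu pref 0)) (ev (S t))))) in P1.
  2:{ intro u; destruct u; unfold d, shift0, sadd, sscal, ev; simpl; ring. }
  rewrite I_add, !I_scal in P1 by (auto; try apply linf_sscal; apply linf_ev). unfold mu in *. lra.
Qed.

Lemma mu_rec pref t : AX pref -> mu pref (S t) = mu pref t * (mu pref 1 / mu pref 0).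
Proof. intros H. pose proof (idis_step pref t 1 H). pose proof (idis_step pref t (-1) H).
  pose proof (mu_pos pref 0 H). apply Rmult_eq_reg_l with (mu pref 0); [|lra].
  field_simplify; [|lra]. lra. Qed.

Lemma mu_geom pref t : AX pref -> mu pref t = mu pref 0 * (mu pref 1 / mu pref 0) ^ t.
Proof. intros H. induction t. simpl; ring. rewrite mu_rec, IHt by auto. simpl; ring. Qed.

Definition Tr (N : nat) (x : seqR) : seqR := fun t => if Nat.leb t N then x t else 0.
Definition Rt (N : nat) (x : seqR) : seqR := fun t => if Nat.leb t N then 0 else x t.
Lemma linf_Tr N x : linf x -> linf (Tr N x).
Proof. intros Hx; destruct (linf_bound x Hx) as [M [HM0 HM]]. exists M; intro t; unfold Tr;
  destruct (Nat.leb t N); auto; rewrite Rabs_R0; auto. Qed.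
Lemma linf_Rt N x : linf x -> linf (Rt N x).
Proof. intros Hx; destruct (linf_bound x Hx) as [M [HM0 HM]]. exists M; intro t; unfold Rt;
  destruct (Nat.leb t N); auto; rewrite Rabs_R0; auto. Qed.

Lemma I_Tr pref N x : AX pref -> linf x ->
  Ice pref (Tr N x) = sum_f_R0 (fun t => mu pref t * x t) N.
Proof. intros H Hx. induction N.
  - rewrite (I_ext pref _ (sscal (x 0%nat) (ev 0))).
    + rewrite I_scal by (auto; apply linf_ev). simpl. unfold mu. ring.
    + intro t; destruct t; unfold Tr, sscal, ev; simpl; ring.
  - rewrite (I_ext pref _ (sadd (Tr N x) (sscal (x (S N)) (ev (S N))))).
    + rewrite I_add, I_scal, IHN by (auto; try apply linf_Tr; auto; try apply linf_sscal; apply linf_ev).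
      simpl. unfold mu. ring.
    + intro t; unfold Tr, sadd, sscal, ev.
      destruct (Nat.leb_spec t (S N)), (Nat.leb_spec t N), (Nat.eqb_spec t (S N)); subst; try lia; ring.
Qed.

Lemma sum_scal c f N : sum_f_R0 (fun t => c * f t) N = c * sum_f_R0 f N.
Proof. induction N; simpl; [ring|rewrite IHN; ring]. Qed.

Lemma sum_ge_count f N : (forall t, 1 <= f t) -> INR (S N) <= sum_f_R0 f N.
Proof. intros Hf; induction N.
  - simpl. specialize (Hf 0%nat); lra.
  - rewrite S_INR. change (sum_f_R0 f (S N)) with (sum_f_R0 f N + f (S N)). specialize (Hf (S N)). lra. Qed.

Definition dl pref := mu pref 1 / mu pref 0.

Lemma sum_mu pref N : AX pref ->
  sum_f_R0 (fun t => mu pref t * cst 1 t) N = mu pref 0 * sum_f_R0 (fun t => dl pref ^ t) N.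
Proof. intros H. rewrite <- sum_scal. apply sum_eq. intros i _. unfold cst. rewrite (mu_geom pref i H).
  unfold dl; ring. Qed.

Lemma sum_le1 pref N : AX pref -> sum_f_R0 (fun t => mu pref t * cst 1 t) N <= 1.
Proof. intros H. rewrite <- I_Tr by (auto; apply linf_cst).
  assert (Ice pref (Tr N (cst 1)) <= Ice pref (cst 1)).
  { apply I_mono; auto. apply linf_cst. apply linf_Tr, linf_cst.
    intro t; unfold Tr, cst; destruct (Nat.leb t N); lra. }
  rewrite I_cst in H0 by auto. exact H0. Qed.

Lemma dl_pos pref : AX pref -> 0 < dl pref.
Proof. intros H; unfold dl; apply Rdiv_lt_0_compat; apply mu_pos; auto. Qed.

Lemma dl_lt1 pref : AX pref -> dl pref < 1.
Proof. intros H. apply Rnot_le_lt; intro L. pose proof (mu_pos pref 0 H) as Hm.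
  destruct (INR_archimed (mu pref 0) 1 Hm) as [n Hn].
  pose proof (sum_le1 pref n H). rewrite sum_mu in H0 by auto.
  assert (INR (S n) <= sum_f_R0 (fun t => dl pref ^ t) n)
    by (apply sum_ge_count; intro; apply pow_R1_Rle; lra).
  rewrite S_INR in H1.
  assert (mu pref 0 * (INR n + 1) <= mu pref 0 * sum_f_R0 (fun t => dl pref ^ t) n)
    by (apply Rmult_le_compat_l; lra). lra. Qed.

Lemma I_Qs pref N : AX pref -> Ice pref (Qs N) = 1 - sum_f_R0 (fun t => mu pref t * cst 1 t) N.
Proof. intros H. rewrite <- I_Tr by (auto; apply linf_cst).
  assert (Ice pref (cst 1) = Ice pref (sadd (Qs N) (Tr N (cst 1)))).
  { apply I_ext. intro t; unfold cst, sadd, Qs, Tr; destruct (Nat.leb t N); ring. }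
  rewrite I_add, I_cst in H0 by (auto; try apply linf_Qs; apply linf_Tr, linf_cst). lra. Qed.

Lemma I_Qs_small pref eps : AX pref -> 0 < eps -> exists N, Ice pref (Qs N) < eps.
Proof. intros H He. pose proof H as H'. dax H'.
  set (E := fun n t => negb (Nat.leb t n)).
  assert (HE : decr_to_empty E).
  { split.
    - intros n t; unfold E. destruct (Nat.leb_spec t (S n)), (Nat.leb_spec t n); simpl; auto; lia.
    - intro t; exists t; unfold E; rewrite Nat.leb_refl; auto. }
  destruct (MC (cst 0) (-eps) E (linf_cst 0) (cst_gt pref SM 0 (-eps) ltac:(lra)) HE (-1)) as [n0 Hn0].
  exists n0. destruct Hn0 as [_ N]. 
  assert (Lw : linf (on_set (E n0) (cst (-1)) (cst 0))) by (apply linf_on_set; apply linf_cst).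
  rewrite (I_rep pref _ _ H (linf_cst _) Lw) in N. rewrite I_cst in N by auto.
  rewrite (I_ext pref _ (sscal (-1) (Qs n0))) in N.
  2:{ intro t; unfold on_set, E, sscal, Qs, cst; destruct (Nat.leb t n0); simpl; ring. }
  rewrite I_scal in N by (auto; apply linf_Qs). lra. Qed.

Lemma I_Qs_nonneg pref N : AX pref -> 0 <= Ice pref (Qs N).
Proof. intros H. rewrite <- (I_cst pref 0 H). apply I_mono; auto. apply linf_Qs. apply linf_cst.
  intro t; unfold Qs, cst; destruct (Nat.leb t N); lra. Qed.

Lemma mu0_eq pref : AX pref -> mu pref 0 = 1 - dl pref.
Proof. intros H. pose proof (dl_pos pref H). pose proof (dl_lt1 pref H). pose proof (mu_pos pref 0 H).
  set (s := mu pref 0 / (1 - dl pref)).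
  assert (Hs : 0 < s) by (apply Rdiv_lt_0_compat; lra).
  assert (HQ : forall N, Ice pref (Qs N) = 1 - s * (1 - dl pref ^ S N)).
  { intro N. rewrite I_Qs, sum_mu, geom_sum by (auto; lra). unfold s. field. lra. }
  assert (s = 1).
  { destruct (Rtotal_order s 1) as [L|[E|L]]; auto; exfalso.
    - destruct (I_Qs_small pref (1 - s) H) as [N HN]; [lra|]. rewrite HQ in HN.
      pose proof (pow_lt (dl pref) (S N) H0). nra.
    - destruct (pow_lt_1_zero (dl pref) ltac:(rewrite Rabs_right; lra) ((s - 1) / s)) as [N HN].
      { apply Rdiv_lt_0_compat; lra. }
      specialize (HN (S N) ltac:(lia)). rewrite Rabs_right in HN by (apply Rle_ge, pow_le; lra).
      pose proof (I_Qs_nonneg pref N H). rewrite HQ in H3.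
      assert (s * dl pref ^ S N < s - 1).
      { apply Rmult_lt_reg_r with (/ s). apply Rinv_0_lt_compat; lra.
        replace (s * dl pref ^ S N * / s) with (dl pref ^ S N) by (field; lra).
        replace ((s - 1) * / s) with ((s - 1) / s) by (field; lra). auto. }
      lra. }
  unfold s in H3. apply Rmult_eq_reg_r with (/ (1 - dl pref)). 2: apply Rinv_neq_0_compat; lra.
  rewrite Rinv_r by lra. exact H3. Qed.

Lemma I_Qs_val pref N : AX pref -> Ice pref (Qs N) = dl pref ^ S N.
Proof. intros H. pose proof (dl_lt1 pref H). rewrite I_Qs, sum_mu, geom_sum, mu0_eq by (auto; lra).
  field. lra. Qed.

Lemma I_eq_D pref x : AX pref -> linf x -> Ice pref x = disc_util (dl pref) x.
Proof. intros H Hx. pose proof (dl_pos pref H). pose proof (dl_lt1 pref H).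
  set (d := dl pref) in *. destruct (linf_bound x Hx) as [M [HM0 HM]].
  assert (Key : forall N, Rabs (sum_f_R0 (fun t => d ^ t * x t) N - Ice pref x / (1 - d))
                          <= M * d ^ S N / (1 - d)).
  { intro N.
    assert (E1 : Ice pref x = Ice pref (Tr N x) + Ice pref (Rt N x)).
    { rewrite <- I_add by (auto; try apply linf_Tr; try apply linf_Rt; auto). apply I_ext.
      intro t; unfold sadd, Tr, Rt; destruct (Nat.leb t N); ring. }
    assert (E2 : Ice pref (Tr N x) = (1 - d) * sum_f_R0 (fun t => d ^ t * x t) N).
    { rewrite I_Tr by auto. rewrite <- sum_scal. apply sum_eq; intros i _.
      rewrite (mu_geom pref i H). change (mu pref 1 / mu pref 0) with (dl pref). rewrite (mu0_eq pref H). fold d. ring. }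
    assert (E3 : Ice pref (Rt N x) <= M * d ^ S N).
    { pose proof (I_Qs_val pref N H) as Q; fold d in Q; rewrite <- Q, <- I_scal by (auto; apply linf_Qs). apply I_mono; auto.
      apply linf_sscal, linf_Qs. apply linf_Rt; auto.
      intro t; unfold sscal, Qs, Rt; destruct (Nat.leb t N). lra.
      pose proof (Rle_abs (x t)); specialize (HM t); lra. }
    assert (E4 : - (M * d ^ S N) <= Ice pref (Rt N x)).
    { replace (- (M * d ^ S N)) with (-M * d ^ S N) by ring.
      pose proof (I_Qs_val pref N H) as Q; fold d in Q; rewrite <- Q, <- I_scal by (auto; apply linf_Qs). apply I_mono; auto.
      apply linf_Rt; auto. apply linf_sscal, linf_Qs.
      intro t; unfold sscal, Qs, Rt; destruct (Nat.leb t N). lra.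
      pose proof (Rle_abs (- x t)); rewrite Rabs_Ropp in H2; specialize (HM t); lra. }
    replace (sum_f_R0 (fun t => d ^ t * x t) N - Ice pref x / (1 - d))
      with (- Ice pref (Rt N x) / (1 - d)) by (rewrite E1, E2; field; lra).
    unfold Rdiv. rewrite Rabs_mult, Rabs_Ropp, (Rabs_right (/ (1 - d))).
    2: apply Rle_ge, Rlt_le, Rinv_0_lt_compat; lra.
    apply Rmult_le_compat_r. apply Rlt_le, Rinv_0_lt_compat; lra.
    apply Rabs_le; lra. }
  unfold disc_util. rewrite (series_of_sum _ (Ice pref x / (1 - d))). field; lra.
  intros eps He.
  destruct (pow_lt_1_zero d ltac:(rewrite Rabs_right; lra) (eps * (1 - d) / (M + 1))) as [N HN].
  { apply Rdiv_lt_0_compat; [apply Rmult_lt_0_compat|]; lra. }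
  exists N. intros n Hn. unfold Rdist. eapply Rle_lt_trans; [apply Key|].
  specialize (HN (S n) ltac:(lia)). rewrite Rabs_right in HN by (apply Rle_ge, pow_le; lra).
  pose proof (pow_le d (S n) ltac:(lra)).
  apply Rmult_lt_reg_r with (1 - d); [lra|].
  replace (M * d ^ S n / (1 - d) * (1 - d)) with (M * d ^ S n) by (field; lra).
  assert (M * d ^ S n <= (M + 1) * d ^ S n) by nra.
  assert ((M + 1) * d ^ S n < eps * (1 - d)).
  { apply Rmult_lt_reg_r with (/ (M + 1)). apply Rinv_0_lt_compat; lra.
    replace ((M + 1) * d ^ S n * / (M + 1)) with (d ^ S n) by (field; lra).
    replace (eps * (1 - d) * / (M + 1)) with (eps * (1 - d) / (M + 1)) by (field; lra). auto. }
  lra.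
Qed.

Lemma D_ev0 d : disc_util d (ev 0) = 1 - d.
Proof. rewrite (D_fin d (ev 0) 0). simpl. unfold ev; simpl; ring.
  intros t Ht. unfold ev. destruct (Nat.eqb_spec t 0); [lia|auto]. Qed.

Theorem proposition3 (pref : seqR -> seqR -> Prop) :
  (weak_order pref /\ pref_continuity pref /\ ICRP pref /\ convexity pref /\
   monotone_continuity pref /\ ISU pref /\ IOU pref /\
   strong_monotonicity pref /\ IDIS pref)
  <->
  (exists delta : R, (0 < delta < 1 /\ const_equiv_rep pref (disc_util delta)) /\
     forall delta' : R, 0 < delta' < 1 /\ const_equiv_rep pref (disc_util delta') ->
       delta' = delta).
Proof.
  split.
  - intro H. change (AX pref) in H. exists (dl pref). split; [split|].
    + split; [apply dl_pos|apply dl_lt1]; auto.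
    + split.
      * intros x Hx. rewrite <- I_eq_D by auto. apply I_spec; auto.
      * intros x y Hx Hy. rewrite <- !I_eq_D by auto. apply I_rep; auto.
    + intros d' [Hd' [Hs Hc]].
      assert (E : Ice pref (ev 0) = disc_util d' (ev 0)).
      { apply I_unique; auto. apply linf_ev. apply Hs, linf_ev. }
      rewrite D_ev0 in E. rewrite (I_eq_D pref _ H (linf_ev 0)), D_ev0 in E. lra.
  - intros [d [[Hd Hr] _]]. apply (rep_to_axioms d); auto.
Qed.
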